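(* Let $S$ be a $\Gamma$-hemiring, let $\mu$ be a prime fuzzy h-ideal of $S$ and let $x\in\mu_0$. Then $\langle x,\mu\rangle=\mathbf{1}_S$, the constant function with value $1$ on $S$.
   Context: A $\Gamma$-hemiring is a pair of additive commutative semigroups with zero $S$ and $\Gamma$ with a map $S\times\Gamma\times S\to S$, $(a,\alpha,b)\mapsto a\alpha b$, such that for all $a,b,c\in S$, $\alpha,\beta\in\Gamma$: $(a+b)\alpha c=a\alpha c+b\alpha c$; $a\alpha(b+c)=a\alpha b+a\alpha c$; $a(\alpha+\beta)b=a\alpha b+a\beta b$; $a\alpha(b\beta c)=(a\alpha b)\beta c$; $0\alpha a=0=a\alpha0$; $a0b=0=b0a$. A fuzzy h-ideal of $S$ is a map $\mu:S\to[0,1]$, not identically $0$, such that for all $x,y,a,b,z\in S$, $\gamma\in\Gamma$: $\mu(x+y)\ge\min\{\mu(x),\mu(y)\}$; $\mu(x\gamma y)\ge\mu(x)$ and $\mu(x\gamma y)\ge\mu(y)$; $x+a+z=b+z$ implies $\mu(x)\ge\min\{\mu(a),\mu(b)\}$. For fuzzy subsets $\sigma,\theta$, the h-product is $(\sigma\Gamma_h\theta)(x)=\sup\min\{\sigma(a_1),\sigma(a_2),\theta(b_1),\theta(b_2)\}$, the supremum over all $z,a_1,a_2,b_1,b_2\in S$, $\gamma,\delta\in\Gamma$ with $x+a_1\gamma b_1+z=a_2\delta b_2+z$, and $0$ if no such expression exists. Inclusion means pointwise $\le$. A fuzzy h-ideal $\mu$ is prime if it is not constant and for any fuzzy h-ideals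 $\sigma,\theta$, $\sigma\Gamma_h\theta\subseteq\mu$ implies $\sigma\subseteq\mu$ or $\theta\subseteq\mu$. $\mu_0=\{x\in S:\mu(x)=\mu(0)\}$. The extension of $\mu$ by $x$ is $\langle x,\mu\rangle(y)=\inf_{s\in S,\ \alpha,\gamma\in\Gamma}\mu(x\alpha s\gamma y)$. *)

(* Defs.v *)
From HB Require Import structures.
From mathcomp Require Import all_boot all_order all_algebra.
From mathcomp Require Import boolp classical_sets reals.
Set Implicit Arguments. Unset Strict Implicit. Unset Printing Implicit Defensive.
Import Order.TTheory GRing.Theory Num.Theory.
Local Open Scope ring_scope.
Local Open Scope classical_set_scope.

Record GammaHemiring := {
  carS : Type;
  carG : Type;
  sadd : carS -> carS -> carS;
  szero : carS;
  gadd : carG -> carG -> carG;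
  gzero : carG;
  gmul : carS -> carG -> carS -> carS;
  saddA : forall a b c, sadd a (sadd b c) = sadd (sadd a b) c;
  saddC : forall a b, sadd a b = sadd b a;
  sadd0 : forall a, sadd szero a = a;
  gaddA : forall a b c, gadd a (gadd b c) = gadd (gadd a b) c;
  gaddC : forall a b, gadd a b = gadd b a;
  gadd0 : forall a, gadd gzero a = a;
  gmulDl : forall a b c al, gmul (sadd a b) al c = sadd (gmul a al c) (gmul b al c);
  gmulDr : forall a b c al, gmul a al (sadd b c) = sadd (gmul a al b) (gmul a al c);
  gmulDm : forall a b al be, gmul a (gadd al be) b = sadd (gmul a al b) (gmul a be b);
  gmulA : forall a b c al be, gmul a al (gmul b be c) = gmul (gmul a al b) be c;
  gmul0l : forall a al, gmul szero al a = szero;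
  gmul0r : forall a al, gmul a al szero = szero;
  gmul0m : forall a b, gmul a gzero b = szero /\ gmul b gzero a = szero
}.

Section Fuzzy.
Variable R : realType.
Variable H : GammaHemiring.
Local Notation S := (carS H).
Local Notation G := (carG H).
Local Notation "a + b" := (sadd a b) : hemi_scope.
Local Notation "a * g * b" := (gmul a g b) : hemi_scope.
Delimit Scope hemi_scope with H.

Definition fuzzy_h_ideal (mu : S -> R) : Prop :=
  (forall x, 0 <= mu x <= 1) /\
  (exists x, mu x != 0) /\
  (forall x y, Num.min (mu x) (mu y) <= mu (x + y)%H) /\
  (forall x y (g : G), mu x <= mu (x * g * y)%H /\ mu y <= mu (x * g * y)%H) /\
  (forall x a b z, (x + a + z)%H = (b + z)%H -> Num.min (mu a) (mu b) <= mu x).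

Definition hprod_set (sg th : S -> R) (x : S) : set R :=
  [set r | exists z a1 a2 b1 b2 (g d : G),
      (x + (a1 * g * b1) + z)%H = ((a2 * d * b2) + z)%H /\
      r = Num.min (Num.min (sg a1) (sg a2)) (Num.min (th b1) (th b2))].

Definition hprod (sg th : S -> R) : S -> R := fun x =>
  if pselect (exists z a1 a2 b1 b2 (g d : G),
                 (x + (a1 * g * b1) + z)%H = ((a2 * d * b2) + z)%H)
  then sup (hprod_set sg th x) else 0.

Definition fincl (sg th : S -> R) : Prop := forall x, sg x <= th x.

Definition prime_fuzzy_h_ideal (mu : S -> R) : Prop :=
  fuzzy_h_ideal mu /\
  ~ (exists c, forall x, mu x = c) /\
  (forall sg th, fuzzy_h_ideal sg -> fuzzy_h_ideal th ->
     fincl (hprod sg th) mu -> fincl sg mu \/ fincl th mu).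

Definition level0 (mu : S -> R) : set S := [set x | mu x = mu (szero H)].

Definition extension (x : S) (mu : S -> R) : S -> R := fun y =>
  inf [set r | exists (s : S) (al g : G), r = mu ((x * al * s) * g * y)%H].

End Fuzzy.

(* Main.v *)
Require Import Defs.
From mathcomp Require Import all_boot all_order all_algebra.
From mathcomp Require Import boolp classical_sets reals.
Local Open Scope ring_scope.
Local Open Scope classical_set_scope.
Import Order.TTheory GRing.Theory Num.Theory.

Theorem theorem3p22 (R : realType) (H : GammaHemiring) (mu : carS H -> R)
  (x : carS H) :
  prime_fuzzy_h_ideal mu -> level0 mu x ->
  forall y : carS H, extension x mu y = 1.
Proof.
move=> [[b01 [[w wnz] [hadd [hmul hh]]]] [ncst hprime]] hx y.
set t := mu (szero H).
have mle : forall u, mu u <= t.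
  move=> u; have := (hmul (szero H) u (gzero H)).2.
  by rewrite gmul0l.
have tpos : 0 < t.
  have := b01 w; case/andP=> w0 _.
  by apply: lt_le_trans (mle w); rewrite lt0r wnz.
have t1 : t = 1.
  pose sg := fun u : carS H => if pselect (mu u = t) then 1 else 0 : R.
  pose th := fun _ : carS H => t.
  have sgI : fuzzy_h_ideal sg.
    split; first by move=> u; rewrite /sg; case: (pselect (mu u = t)) => ? /=; rewrite ?ler01 ?lexx.
    split; first by exists (szero H); rewrite /sg; case: (pselect (mu (szero H) = t)) => // ? /=; exact: oner_neq0.
    split.
      move=> a b; rewrite /sg; case: (pselect (mu a = t)) => ha; case: (pselect (mu b = t)) => hb;
        case: (pselect (mu (sadd a b) = t)) => hab //; rewrite ?ge_min ?lexx ?ler01 ?orbT //.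
      exfalso; apply: hab; apply/le_anti; rewrite mle /=.
      by have := hadd a b; rewrite ha hb minxx.
    split.
      move=> a b g; rewrite /sg; case: (pselect (mu a = t)) => ha; case: (pselect (mu b = t)) => hb;
        case: (pselect (mu (gmul a g b) = t)) => hab //; rewrite ?lexx ?ler01 //; split => //;
        try (exfalso; apply: hab; apply/le_anti; rewrite mle /=;
          first [by rewrite -ha; exact: (hmul a b g).1 | by rewrite -hb; exact: (hmul a b g).2]).
    move=> u a b z e; rewrite /sg; case: (pselect (mu a = t)) => ha; case: (pselect (mu b = t)) => hb;
      case: (pselect (mu u = t)) => hu //; rewrite ?ge_min ?lexx ?ler01 ?orbT //.
    exfalso; apply: hu; apply/le_anti; rewrite mle /=.
    by have := hh u a b z e; rewrite ha hb minxx.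
  have thI : fuzzy_h_ideal th.
    split; first by move=> u; rewrite /th ltW //= -/t; have := b01 (szero H); case/andP.
    split; first by exists w; rewrite /th lt0r_neq0.
    split; first by move=> a b; rewrite /th minxx.
    split; first by move=> *; rewrite /th lexx.
    by move=> *; rewrite /th minxx.
  have inc : fincl (hprod sg th) mu.
    move=> u; rewrite /hprod; case: pselect => hex; last first.
      by have := b01 u; case/andP.
    apply: ge_sup.
      case: hex => z [a1 [a2 [b1 [b2 [g [d e]]]]]].
      by eexists; exists z, a1, a2, b1, b2, g, d; split; [exact: e|].
    move=> r [z [a1 [a2 [b1 [b2 [g [d [e ->]]]]]]]].
    rewrite /sg /th minxx; case: (pselect (mu a1 = t)) => h1; case: (pselect (mu a2 = t)) => h2.
    - rewrite minxx; have := hh u _ _ z e.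
      have m1 : mu (gmul a1 g b1) = t.
        by apply/le_anti; rewrite mle /= -h1 (hmul _ _ _).1.
      have m2 : mu (gmul a2 d b2) = t.
        by apply/le_anti; rewrite mle /= -h2 (hmul _ _ _).1.
      rewrite m1 m2 minxx => HH; apply: le_trans HH; rewrite ge_min lexx orbT //.
    - apply: (le_trans _ (proj1 (andP (b01 u)))); by rewrite /= !ge_min lexx ?orbT.
    - apply: (le_trans _ (proj1 (andP (b01 u)))); by rewrite /= !ge_min lexx ?orbT.
    - apply: (le_trans _ (proj1 (andP (b01 u)))); by rewrite /= !ge_min lexx ?orbT.
  case: (hprime sg th sgI thI inc) => [hs|ht].
    apply/le_anti; have := b01 (szero H); case/andP => _ -> /=.
    by have := hs (szero H); rewrite /sg; case: (pselect (mu (szero H) = t)).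
  exfalso; apply: ncst; exists t => u; apply/le_anti; rewrite mle /=.
  exact: ht u.
have hx' : mu x = t := hx.
rewrite /extension.
have -> : [set r | exists (s : carS H) (al g : carG H),
           r = mu (gmul (gmul x al s) g y)] = [set 1].
  apply/seteqP; split => r /=.
    move=> [s [al [g ->]]]; apply/le_anti.
    have := b01 (gmul (gmul x al s) g y); case/andP => _ -> /=.
    rewrite -t1 -hx'; apply: le_trans (hmul _ _ _).1 _.
    exact: (hmul _ _ _).1.
  move=> ->; exists (szero H), (gzero H), (gzero H); apply/le_anti.
  have := b01 (gmul (gmul x (gzero H) (szero H)) (gzero H) y); case/andP => _ -> /=; rewrite andbT.
  rewrite -t1 -hx'; apply: le_trans (hmul _ _ _).1 _.
  exact: (hmul _ _ _).1.
exact: inf1.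
Qed.
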